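(* Let $n\ge2$ and consider the general linear–quadratic game with dynamics $\mathbf x_{t+1}=\mathbf A_t\mathbf x_t+\mathbf B_t\mathbf u_t+\mathbf w_t$ and per-step costs $c^i_t(\mathbf x_t,\mathbf u_t)=\mathbf x_t^\top Q^i_t\mathbf x_t+\mathbf u_t^\top R^i_t\mathbf u_t$, $i\in\{1,\dots,n\}$, and suppose the players are exchangeable. Then there exist matrices $A_t,B_t,\bar A_t,\bar B_t$ such that, with $\bar x_t=\frac1n\sum_{j=1}^nx^j_t$ and $\bar u_t=\frac1n\sum_{j=1}^nu^j_t$, the dynamics of every player $i$ read $x^i_{t+1}=A_tx^i_t+B_tu^i_t+\bar A_t\bar x_t+\bar B_t\bar u_t+w^i_t$. Moreover, there exist matrices $Q_t,R_t,S^x_t,S^u_t,\bar Q_t,\bar R_t,G^x_t,G^u_t$ such that the cost of every player $i$ can be written as $c^i_t=(x^i_t)^\top Q_tx^i_t+2(x^i_t)^\top S^x_t\bar x_t+\bar x_t^\top\bar Q_t\bar x_t+(u^i_t)^\top R_tu^i_t+2(u^i_t)^\top S^u_t\bar u_t+\bar u_t^\top\bar R_t\bar u_t+\frac1n\sum_{j=1}^n\big((x^j_t)^\top G^x_tx^j_t+(u^j_t)^\top G^u_tu^j_t\big)$.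
   Context: Here $\mathbf x_t=(x^1_t,\dots,x^n_t)$ with $x^i_t\in\mathbb R^{d_x}$, $\mathbf u_t=(u^1_t,\dots,u^n_t)$ with $u^i_t\in\mathbb R^{d_u}$, $\mathbf w_t=(w^1_t,\dots,w^n_t)$ with $w^i_t\in\mathbb R^{d_x}$, and $\mathbf A_t,\mathbf B_t,Q^i_t,R^i_t$ are matrices of appropriate (block) sizes; write $\mathbf c_t=(c^1_t,\dots,c^n_t)$. For $i,j\in\{1,\dots,n\}$ let $\sigma_{i,j}$ denote the map swapping the $i$-th and $j$-th components of an $n$-component vector. The players are called exchangeable if for every pair $i,j$ and every $t$: whenever $\mathbf x_{t+1}=\mathbf A_t\mathbf x_t+\mathbf B_t\mathbf u_t+\mathbf w_t$, also $\sigma_{i,j}(\mathbf x_{t+1})=\mathbf A_t\sigma_{i,j}(\mathbf x_t)+\mathbf B_t\sigma_{i,j}(\mathbf u_t)+\sigma_{i,j}(\mathbf w_t)$; and $\sigma_{i,j}(\mathbf c_t(\mathbf x_t,\mathbf u_t))=\mathbf c_t(\sigma_{i,j}(\mathbf x_t),\sigma_{i,j}(\mathbf u_t))$ for all $\mathbf x_t,\mathbf u_t$. *)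

(* Defs.v *)
From HB Require Import structures.
From mathcomp Require Import all_boot all_order all_algebra all_fingroup.
Set Implicit Arguments. Unset Strict Implicit. Unset Printing Implicit Defensive.
Import Order.TTheory GRing.Theory Num.Theory.
Local Open Scope ring_scope.

Definition jvec (R : realFieldType) (n d : nat) := 'I_n -> 'cV[R]_d.

Definition bmx (R : realFieldType) (n p q : nat) := 'I_n -> 'I_n -> 'M[R]_(p, q).

Definition bapply (R : realFieldType) (n p q : nat) (M : bmx R n p q)
  (v : jvec R n q) : jvec R n p :=
  fun i => \sum_(j < n) M i j *m v j.

Definition jadd (R : realFieldType) (n d : nat) (a b : jvec R n d) : jvec R n d :=
  fun i => a i + b i.

Definition bquad (R : realFieldType) (n d : nat) (M : bmx R n d d) (v : jvec R n d) : R :=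
  \sum_(j < n) \sum_(k < n) ((v j)^T *m M j k *m v k) 0 0.

Definition qf (R : realFieldType) (d : nat) (a : 'cV[R]_d) (M : 'M[R]_d) (b : 'cV[R]_d) : R :=
  ((a^T *m M) *m b) 0 0.

Definition swapc (T : Type) (n : nat) (i j : 'I_n) (v : 'I_n -> T) : 'I_n -> T :=
  fun k => v (tperm i j k).

Definition jmean (R : realFieldType) (n d : nat) (v : jvec R n d) : 'cV[R]_d :=
  (n%:R)^-1 *: \sum_(j < n) v j.

Definition costv (R : realFieldType) (n dx du : nat)
  (Q : 'I_n -> bmx R n dx dx) (Rm : 'I_n -> bmx R n du du)
  (x : jvec R n dx) (u : jvec R n du) : 'I_n -> R :=
  fun i => bquad (Q i) x + bquad (Rm i) u.

Definition exchangeable (R : realFieldType) (n dx du : nat)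
  (A : nat -> bmx R n dx dx) (B : nat -> bmx R n dx du)
  (Q : nat -> 'I_n -> bmx R n dx dx) (Rm : nat -> 'I_n -> bmx R n du du) : Prop :=
  forall (i j : 'I_n) (t : nat),
    (forall (x x' w : jvec R n dx) (u : jvec R n du),
        x' = jadd (jadd (bapply (A t) x) (bapply (B t) u)) w ->
        swapc i j x' =
        jadd (jadd (bapply (A t) (swapc i j x)) (bapply (B t) (swapc i j u))) (swapc i j w))
    /\
    (forall (x : jvec R n dx) (u : jvec R n du),
        swapc i j (costv (Q t) (Rm t) x u) = costv (Q t) (Rm t) (swapc i j x) (swapc i j u)).

(* Main.v *)
Require Import Defs.
From HB Require Import structures.
From mathcomp Require Import all_boot all_order all_algebra all_fingroup.
From mathcomp Require Import ring lra zify.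
Import Order.TTheory GRing.Theory Num.Theory.
Local Open Scope ring_scope.
Set Implicit Arguments. Unset Strict Implicit.

Section H.
Variable R : realFieldType.

Lemma qfDl d (a b c : 'cV[R]_d) M : qf (a + b) M c = qf a M c + qf b M c.
Proof. by rewrite /qf linearD /= !mulmxDl mxE. Qed.
Lemma qfDr d (a b c : 'cV[R]_d) M : qf a M (b + c) = qf a M b + qf a M c.
Proof. by rewrite /qf mulmxDr mxE. Qed.
Lemma qfZl d k (a c : 'cV[R]_d) M : qf (k *: a) M c = k * qf a M c.
Proof. by rewrite /qf linearZ /= -!scalemxAl mxE. Qed.
Lemma qfZr d k (a c : 'cV[R]_d) M : qf a M (k *: c) = k * qf a M c.
Proof. by rewrite /qf -scalemxAr mxE. Qed.
Lemma qfDm d (a c : 'cV[R]_d) M N : qf a (M + N) c = qf a M c + qf a N c.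
Proof. by rewrite /qf mulmxDr mulmxDl mxE. Qed.
Lemma qfNm d (a c : 'cV[R]_d) M : qf a (- M) c = - qf a M c.
Proof. by rewrite /qf mulmxN mulNmx mxE. Qed.
Lemma qfBm d (a c : 'cV[R]_d) M N : qf a (M - N) c = qf a M c - qf a N c.
Proof. by rewrite qfDm qfNm. Qed.
Lemma qfZm d k (a c : 'cV[R]_d) M : qf a (k *: M) c = k * qf a M c.
Proof. by rewrite /qf -scalemxAr -scalemxAl mxE. Qed.
Lemma qf0l d (c : 'cV[R]_d) M : qf 0 M c = 0.
Proof. by rewrite /qf linear0 !mul0mx mxE. Qed.
Lemma qf0r d (c : 'cV[R]_d) M : qf c M 0 = 0.
Proof. by rewrite /qf mulmx0 mxE. Qed.
Lemma qf_suml d n (a : 'I_n -> 'cV[R]_d) c M :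
  qf (\sum_j a j) M c = \sum_j qf (a j) M c.
Proof.
elim/big_rec2: _ => [|j x y _ <-]; first exact: qf0l.
by rewrite qfDl.
Qed.
Lemma qf_sumr d n (a : 'I_n -> 'cV[R]_d) c M :
  qf c M (\sum_j a j) = \sum_j qf c M (a j).
Proof.
elim/big_rec2: _ => [|j x y _ <-]; first exact: qf0r.
by rewrite qfDr.
Qed.
Lemma qf_tr d (a c : 'cV[R]_d) M : qf a M^T c = qf c M a.
Proof.
rewrite /qf; have E : forall X : 'M[R]_1, X 0 0 = X^T 0 0 by move=> X; rewrite mxE.
by rewrite [RHS]E !trmx_mul trmxK mulmxA.
Qed.
Lemma qf_delta d (M : 'M[R]_d) r c : qf (delta_mx r 0) M (delta_mx c 0) = M r c.
Proof. by rewrite /qf trmx_delta -rowE -colE !mxE. Qed.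
Lemma qf_inj d (M N : 'M[R]_d) : (forall a b, qf a M b = qf a N b) -> M = N.
Proof. by move=> H; apply/matrixP => r c; rewrite -!qf_delta H. Qed.
Lemma mul_inj p q (M N : 'M[R]_(p, q)) : (forall v : 'cV[R]_q, M *m v = N *m v) -> M = N.
Proof.
move=> H; apply/matrixP => r c.
have := congr1 (fun X : 'cV_p => X r 0) (H (delta_mx c (0 : 'I_1))).
by rewrite -!colE !mxE.
Qed.

Definition ej n d (j : 'I_n) (a : 'cV[R]_d) : jvec R n d :=
  fun k => if k == j then a else 0.
Arguments ej {n d}.

Lemma sum_if1 n (V : zmodType) (j : 'I_n) (F : 'I_n -> V) :
  \sum_(k < n) (if k == j then F k else 0) = F j.
Proof. by rewrite -big_mkcond big_pred1_eq. Qed.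

Lemma qf_ifl d (b : bool) (a c : 'cV[R]_d) M :
  qf (if b then a else 0) M c = if b then qf a M c else 0.
Proof. by case: b; rewrite ?qf0l. Qed.
Lemma qf_ifr d (b : bool) (a c : 'cV[R]_d) M :
  qf c M (if b then a else 0) = if b then qf c M a else 0.
Proof. by case: b; rewrite ?qf0r. Qed.

Lemma bquadE n d (N : bmx R n d d) v :
  bquad N v = \sum_j \sum_k qf (v j) (N j k) (v k).
Proof. by []. Qed.

Lemma bquad_ext n d (N : bmx R n d d) v w :
  (forall k, v k = w k) -> bquad N v = bquad N w.
Proof.
move=> H; rewrite !bquadE; apply: eq_bigr => j _; apply: eq_bigr => k _.
by rewrite !H.
Qed.

Lemma bquad_add n d (N : bmx R n d d) v w :
  bquad N (jadd v w) = bquad N v + bquad N w +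
    \sum_j \sum_k (qf (v j) (N j k) (w k) + qf (w j) (N j k) (v k)).
Proof.
rewrite !bquadE -!big_split; apply: eq_bigr => j _.
rewrite -!big_split; apply: eq_bigr => k _.
rewrite /jadd !qfDl !qfDr /=; ring.
Qed.

Lemma bquad_ej n d (N : bmx R n d d) (j : 'I_n) (a : 'cV[R]_d) :
  bquad N (ej j a) = qf a (N j j) a.
Proof.
rewrite bquadE /ej.
under eq_bigr => k _ do under eq_bigr => m _ do rewrite qf_ifr qf_ifl.
under eq_bigr => k _ do rewrite sum_if1.
by rewrite sum_if1.
Qed.

Lemma polar n d (N : bmx R n d d) (j l : 'I_n) (a b : 'cV[R]_d) :
  qf a (N j l + (N l j)^T) b =
  bquad N (jadd (ej j a) (ej l b)) - bquad N (ej j a) - bquad N (ej l b).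
Proof.
rewrite bquad_add qfDm qf_tr.
under eq_bigr => k _ do rewrite big_split /=.
rewrite big_split /= /ej.
under eq_bigr => k _ do under eq_bigr => m _ do rewrite qf_ifr qf_ifl.
under [X in _ = _ + _ + (_ + X) - _ - _]eq_bigr => k _ do under eq_bigr => m _ do rewrite qf_ifr qf_ifl.
under eq_bigr => k _ do rewrite sum_if1.
under [X in _ = _ + _ + (_ + X) - _ - _]eq_bigr => k _ do rewrite sum_if1.
rewrite !sum_if1; ring.
Qed.

Lemma tperm_eq n (i j k m : 'I_n) : (tperm i j k == m) = (k == tperm i j m).
Proof. by apply/eqP/eqP => [<-|->]; rewrite tpermK. Qed.

Lemma swap_ej n d (i j m : 'I_n) (a : 'cV[R]_d) k :
  ej m a (tperm i j k) = ej (tperm i j m) a k.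
Proof. by rewrite /ej tperm_eq. Qed.

Lemma bquad0 n d (N : bmx R n d d) : bquad N (fun _ => 0) = 0.
Proof. by rewrite bquadE big1 // => j _; rewrite big1 // => k _; rewrite qf0l. Qed.

Lemma bapply_ej n p q (M : bmx R n p q) m k (v : 'cV[R]_q) :
  \sum_l M m l *m ej k v l = M m k *m v.
Proof.
under eq_bigr => l _ do rewrite /ej (fun_if (mulmx (M m l))) mulmx0.
by rewrite sum_if1.
Qed.

Lemma bapply_ej_swap n p q (M : bmx R n p q) m k a b (v : 'cV[R]_q) :
  \sum_l M m l *m ej k v (tperm a b l) = M m (tperm a b k) *m v.
Proof.
under eq_bigr => l _ do rewrite swap_ej.
by rewrite bapply_ej.
Qed.

Lemma bapply0 n p q (M : bmx R n p q) m :
  \sum_l M m l *m (0 : 'cV[R]_q) = 0.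
Proof. by rewrite big1 // => l _; rewrite mulmx0. Qed.


End H.
Section S.
Variables (R : realFieldType) (n : nat) (hn : (2 <= n)%N).
Let i0 : 'I_n := Ordinal (ltnW hn).
Let i1 : 'I_n := Ordinal hn.
Let h10l : i1 != i0. Proof. by rewrite -val_eqE. Qed.
Let hn0 : n%:R != 0 :> R. Proof. by rewrite pnatr_eq0 -lt0n; exact: ltnW hn. Qed.

Lemma cost_struct d (M : 'I_n -> bmx R n d d)
 (H : forall i j k y, bquad (M (tperm i j k)) y = bquad (M k) (swapc i j y)) :
 exists Qt Sx Qbar G : 'M[R]_d, forall (y : jvec R n d) i,
   bquad (M i) y = qf (y i) Qt (y i) + 2%:R * qf (y i) Sx (jmean y)
     + qf (jmean y) Qbar (jmean y) + (n%:R)^-1 * \sum_j qf (y j) G (y j).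
Proof.
have h10 := h10l.
set N := M i0.
have Hq : forall a b, a != i0 -> b != i0 -> forall y, bquad N y = bquad N (swapc a b y).
  by move=> a b ha hb y; rewrite -H tpermD.
pose P j l := N j l + (N l j)^T.
have Pinv : forall a b, a != i0 -> b != i0 -> forall j l,
    P j l = P (tperm a b j) (tperm a b l).
  move=> a b ha hb j l; apply: qf_inj => x z; rewrite !polar.
  rewrite (Hq a b ha hb (jadd _ _)) (Hq a b ha hb (ej j x)) (Hq a b ha hb (ej l z)).
  by congr (_ - _ - _); apply: bquad_ext => k; rewrite /swapc /jadd !swap_ej.
have Pd : forall j, j != i0 -> P j j = P i1 i1.
  by move=> j hj; rewrite (Pinv j i1 hj h10) tpermL.
have Pr : forall l, l != i0 -> P i0 l = P i0 i1.
  by move=> l hl; rewrite (Pinv l i1 hl h10) tpermL tpermD.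
have Pc : forall l, l != i0 -> P l i0 = P i1 i0.
  by move=> l hl; rewrite (Pinv l i1 hl h10) tpermL tpermD.
have [δ Po] : exists δ, forall j l, j != i0 -> l != i0 -> l != j -> P j l = δ.
  case: (ltnP 2 n) => h3.
  - pose i2 : 'I_n := Ordinal h3.
    exists (P i1 i2) => j l hj hl hlj.
    have h20 : i2 != i0 by rewrite -val_eqE.
    have h12 : i1 != i2 by rewrite -val_eqE.
    rewrite (Pinv j i1 hj h10) tpermL.
    set l' := tperm j i1 l.
    have hl'0 : l' != i0.
      apply: contra hl => /eqP e; apply/eqP; apply: (@perm_inj _ (tperm j i1)).
      by rewrite -/l' e tpermD.
    have hl'1 : l' != i1.
      apply: contra hlj => /eqP e; apply/eqP; apply: (@perm_inj _ (tperm j i1)).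
      by rewrite -/l' e tpermL.
    have h1l' : i1 != l' by rewrite eq_sym.
    have h21 : i2 != i1 by rewrite eq_sym.
    by rewrite (Pinv l' i2 hl'0 h20) tpermD // tpermL.
  - exists 0 => j l hj hl hlj; exfalso.
    move: hj hl hlj; rewrite -!val_eqE /= => hj hl hlj.
    have := ltn_ord j; have := ltn_ord l. lia.
have Pdef : forall j l, P j l = N j l + (N l j)^T by [].
clearbody P.
pose α := P i0 i0; pose β := P i0 i1; pose β' := P i1 i0; pose γ := P i1 i1.
pose K := α - β - β' - γ + δ + δ.
have Dec : forall (y : jvec R n d) j l, qf (y j) (P j l) (y l) =
   qf (y j) δ (y l) + (if l == j then qf (y j) (γ - δ) (y l) else 0)
   + (if j == i0 then qf (y j) (β - δ) (y l) else 0)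
   + (if l == i0 then qf (y j) (β' - δ) (y l) else 0)
   + (if l == i0 then (if j == i0 then qf (y j) K (y l) else 0) else 0).
  move=> y j l.
  have [->|hj] := eqVneq j i0; have [->|hl] := eqVneq l i0.
  - by rewrite ?eqxx /K !qfDm !qfNm /α /β /β' /γ; ring.
  - by rewrite ?eqxx ?(negbTE hl) Pr // qfDm qfNm /β; ring.
  - by rewrite ?eqxx [i0 == j]eq_sym ?(negbTE hj) Pc // qfDm qfNm /β'; ring.
  - rewrite ?(negbTE hj) ?(negbTE hl).
    have [->|hlj] := eqVneq l j.
    + by rewrite Pd // qfDm qfNm /γ; ring.
    + by rewrite Po //; ring.
clearbody K α β β' γ.
have HX : forall y : jvec R n d,
    \sum_j \sum_l qf (y j) (P j l) (y l) = bquad N y + bquad N y.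
  move=> y; under eq_bigr => j _ do under eq_bigr => l _ do rewrite Pdef qfDm qf_tr.
  under eq_bigr => j _ do rewrite big_split /=.
  by rewrite big_split /= [X in _ + X = _]exchange_big.
have HXd : forall y : jvec R n d,
    \sum_j \sum_l qf (y j) (P j l) (y l) =
    qf (\sum_j y j) δ (\sum_j y j) + \sum_j qf (y j) (γ - δ) (y j)
    + qf (y i0) (β - δ) (\sum_j y j) + qf (\sum_j y j) (β' - δ) (y i0)
    + qf (y i0) K (y i0).
  move=> y; under eq_bigr => j _ do under eq_bigr => l _ do rewrite Dec.
  under eq_bigr => j _ do rewrite !big_split /=.
  rewrite !big_split /=.
  congr (_ + _ + _ + _ + _).
  - by rewrite qf_suml; apply: eq_bigr => j _; rewrite qf_sumr.
  - by apply: eq_bigr => j _; rewrite sum_if1.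
  - by rewrite exchange_big qf_sumr; apply: eq_bigr => l _; rewrite sum_if1.
  - by rewrite qf_suml; apply: eq_bigr => j _; rewrite sum_if1.
  - by under eq_bigr => j _ do rewrite sum_if1; rewrite sum_if1.
pose Qt := 2^-1 *: K.
pose Sx := (4^-1 * n%:R) *: ((β - δ) + (β' - δ)^T).
pose Qbar := (2^-1 * n%:R ^+ 2) *: δ.
pose G := (2^-1 * n%:R) *: (γ - δ).
have main0 : forall y : jvec R n d, bquad N y = qf (y i0) Qt (y i0)
   + 2%:R * qf (y i0) Sx (jmean y) + qf (jmean y) Qbar (jmean y)
   + (n%:R)^-1 * \sum_j qf (y j) G (y j).
  move=> y; have E := HX y; rewrite HXd in E.
  have E2 : bquad N y = 2^-1 * (bquad N y + bquad N y) by field.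
  rewrite E2 -E /jmean /Qt /Sx /Qbar /G.
  have -> : \sum_j qf (y j) ((2^-1 * n%:R) *: (γ - δ)) (y j)
     = (2^-1 * n%:R) * \sum_j qf (y j) (γ - δ) (y j).
    by rewrite mulr_sumr; apply: eq_bigr => j _; rewrite qfZm.
  rewrite !qfZm !qfZl !qfZr !qfDm !qfNm !qf_tr !qfDm !qfNm.
  by field; exact: hn0.
exists Qt, Sx, Qbar, G => y i.
have -> : bquad (M i) y = bquad N (swapc i0 i y) by rewrite -H tpermL.
have Hm : jmean (swapc i0 i y) = jmean y.
  by rewrite /jmean /swapc [in RHS](reindex_inj (@perm_inj _ (tperm i0 i))).
have Hs : \sum_j qf (swapc i0 i y j) G (swapc i0 i y j) = \sum_j qf (y j) G (y j).
  by rewrite /swapc [in RHS](reindex_inj (@perm_inj _ (tperm i0 i))).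
by rewrite main0 Hm Hs /swapc /= tpermL.
Qed.

Lemma dyn_struct p q (M : bmx R n p q)
  (hM : forall a b m k, M (tperm a b m) k = M m (tperm a b k)) :
  exists (D O : 'M[R]_(p, q)), forall (x : jvec R n q) m,
    bapply M x m = D *m x m + O *m jmean x.
Proof.
have h10 := h10l.
have E : forall m k, M m k = M i0 i1 + (if k == m then M i0 i0 - M i0 i1 else 0).
  move=> m k; have [<-|hkm] := eqVneq k m.
    have := hM i0 k i0 k; rewrite tpermL tpermR => ->.
    by rewrite addrC subrK.
  rewrite addr0.
  have := hM m i0 i0 k; rewrite tpermR => ->.
  set k' := tperm m i0 k.
  have hk' : k' != i0.
    apply: contra hkm => /eqP e; apply/eqP; apply: (@perm_inj _ (tperm m i0)).
    by rewrite -/k' e tpermL.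
  by have := hM k' i1 i0 k'; rewrite tpermD // tpermL => <-.
exists (M i0 i0 - M i0 i1), (n%:R *: M i0 i1) => x m.
rewrite /bapply.
under eq_bigr => k _ do rewrite E mulmxDl (fun_if (fun A => A *m x k)) mul0mx.
rewrite big_split /= sum_if1 -mulmx_sumr /jmean -scalemxAr -scalemxAl scalerA.
by rewrite mulVf // scale1r addrC.
Qed.

End S.

Unset Implicit Arguments.
Set Strict Implicit.

Theorem proposition1 (R : realFieldType) (n dx du : nat) (hn : (2 <= n)%N)
  (A : nat -> bmx R n dx dx) (B : nat -> bmx R n dx du)
  (Q : nat -> 'I_n -> bmx R n dx dx) (Rm : nat -> 'I_n -> bmx R n du du) :
  exchangeable A B Q Rm ->
  forall t : nat,
    (exists (At Abar : 'M[R]_dx) (Bt Bbar : 'M[R]_(dx, du)),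
      forall (x w : jvec R n dx) (u : jvec R n du) (i : 'I_n),
        jadd (jadd (bapply (A t) x) (bapply (B t) u)) w i =
        At *m x i + Bt *m u i + Abar *m jmean x + Bbar *m jmean u + w i)
    /\
    (exists (Qt Sx Qbar Gx : 'M[R]_dx) (Rt Su Rbar Gu : 'M[R]_du),
      forall (x : jvec R n dx) (u : jvec R n du) (i : 'I_n),
        costv (Q t) (Rm t) x u i =
        qf (x i) Qt (x i) + 2%:R * qf (x i) Sx (jmean x) + qf (jmean x) Qbar (jmean x)
        + qf (u i) Rt (u i) + 2%:R * qf (u i) Su (jmean u) + qf (jmean u) Rbar (jmean u)
        + (n%:R)^-1 * \sum_(j < n) (qf (x j) Gx (x j) + qf (u j) Gu (u j))).
Proof.
move=> Hex t; split.
- have hA : forall a b m k, A t (tperm a b m) k = A t m (tperm a b k).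
    move=> a b m k; apply: mul_inj => v.
    have := congr1 (fun f => f m)
      ((Hex a b t).1 (ej k v) _ (fun _ => 0) (fun _ => 0) erefl).
    rewrite /swapc /jadd /bapply /=.
    by rewrite !bapply_ej_swap !bapply_ej !bapply0 !addr0.
  have hB : forall a b m k, B t (tperm a b m) k = B t m (tperm a b k).
    move=> a b m k; apply: mul_inj => v.
    have := congr1 (fun f => f m)
      ((Hex a b t).1 (fun _ => 0) _ (fun _ => 0) (ej k v) erefl).
    rewrite /swapc /jadd /bapply /=.
    by rewrite !bapply_ej_swap !bapply_ej !bapply0 !add0r !addr0.
  have [Da [Oa HA]] := dyn_struct hn hA.
  have [Db [Ob HB]] := dyn_struct hn hB.
  exists Da, Oa, Db, Ob => x w u i.
  by rewrite /jadd HA HB addrACA !addrA.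
- have hQ : forall a b k y, bquad (Q t (tperm a b k)) y = bquad (Q t k) (swapc a b y).
    move=> a b k y.
    have := congr1 (fun f => f k) ((Hex a b t).2 y (fun _ => 0)).
    by rewrite /swapc /costv /= !bquad0 !addr0.
  have hR : forall a b k y, bquad (Rm t (tperm a b k)) y = bquad (Rm t k) (swapc a b y).
    move=> a b k y.
    have := congr1 (fun f => f k) ((Hex a b t).2 (fun _ => 0) y).
    by rewrite /swapc /costv /= !bquad0 !add0r.
  have [Qt [Sx [Qbar [Gx HQ]]]] := cost_struct hn hQ.
  have [Rt [Su [Rbar [Gu HR]]]] := cost_struct hn hR.
  exists Qt, Sx, Qbar, Gx, Rt, Su, Rbar, Gu => x u i.
  rewrite /costv HQ HR big_split /= mulrDr; ring.
Qed.
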